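(* Let $p$ be a prime, $\alpha\in[0,1]$ and $e\ge1$ an integer. The following are equivalent: (1) $\lfloor (p^e-1)\alpha\rfloor=p^e\langle\alpha\rangle_e$; (2) $\alpha\le p^e\langle\alpha\rangle^e$; (3) $\alpha\ge\frac{p^e}{p^e-1}\langle\alpha\rangle_e$.
   Context: For $\alpha\in(0,1]$, the non-terminating base $p$ expansion is the unique expression $\alpha=\sum_{e\ge1}a_e/p^e$ with integers $0\le a_e\le p-1$ not all eventually zero. The $e$-th truncation is $\langle\alpha\rangle_e:=\sum_{i=1}^e a_i/p^i$, and the $e$-th tail is $\langle\alpha\rangle^e:=\alpha-\langle\alpha\rangle_e$. By convention $\langle0\rangle_e=\langle0\rangle^e=0$. *)

(* Defs.v *)
From Stdlib Require Import ClassicalEpsilon.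
From mathcomp Require Import all_boot all_order all_algebra.
From mathcomp Require Import all_classical all_reals all_analysis.
Set Implicit Arguments. Unset Strict Implicit. Unset Printing Implicit Defensive.
Import Order.TTheory GRing.Theory Num.Theory numFieldNormedType.Exports.
Local Open Scope classical_set_scope.
Local Open Scope ring_scope.

(* [a] (digits a 1, a 2, ...; a 0 is unused) is the non-terminating base p
   expansion of alpha: alpha = sum_{e>=1} a_e / p^e, 0 <= a_e <= p-1,
   and the a_e are not eventually zero. *)
Definition is_ntexp {R : realType} (p : nat) (alpha : R) (a : nat -> nat) : Prop :=
  (forall e, (1 <= e)%N -> (a e < p)%N) /\
  (forall n, exists m, (n <= m)%N /\ a m <> 0%N) /\
  (series (fun k => (a k.+1)%:R / (p%:R ^+ k.+1) : R) @ \oo --> alpha).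

(* The digit sequence of the non-terminating expansion (unique when it exists,
   for alpha in (0,1]). *)
Definition ntdigits {R : realType} (p : nat) (alpha : R) : nat -> nat :=
  epsilon (inhabits (fun _ => 0%N)) (is_ntexp p alpha).

Definition trunc {R : realType} (p : nat) (alpha : R) (e : nat) : R :=
  if alpha == 0 then 0
  else \sum_(1 <= i < e.+1) ((ntdigits p alpha i)%:R / (p%:R ^+ i)).

Definition tail {R : realType} (p : nat) (alpha : R) (e : nat) : R :=
  alpha - trunc p alpha e.

(* Main.v *)
Require Import Defs.
From Stdlib Require Import ClassicalEpsilon Classical.
From mathcomp Require Import all_boot all_order all_algebra.
From mathcomp Require Import all_classical all_reals all_analysis.
From mathcomp Require Import ring lra zify.
Import Order.TTheory GRing.Theory Num.Theory numFieldNormedType.Exports.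
Local Open Scope classical_set_scope.
Local Open Scope ring_scope.

Section Aux.
Variable R : realType.
Variable p : nat.
Hypothesis hp : (1 < p)%N.
Local Notation P := (p%:R : R).

Definition Sa (a : nat -> nat) (n : nat) : R :=
  \sum_(1 <= i < n.+1) ((a i)%:R / (P ^+ i)).

Lemma P_gt1 : 1 < P. Proof. by rewrite ltr1n. Qed.
Lemma P_gt0 : 0 < P. Proof. by have := P_gt1; lra. Qed.
Lemma Pn_gt0 n : 0 < P ^+ n. Proof. exact: exprn_gt0 P_gt0. Qed.

Lemma Sa0 a : Sa a 0 = 0. Proof. by rewrite /Sa big_geq. Qed.
Lemma SaS a n : Sa a n.+1 = Sa a n + (a n.+1)%:R / P ^+ n.+1.
Proof. by rewrite /Sa big_nat_recr. Qed.

Lemma seriesSa a n :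
  series (fun k => (a k.+1)%:R / (P ^+ k.+1) : R) n = Sa a n.
Proof. by rewrite seriesEnat /= /Sa big_add1. Qed.

Lemma Sa_int a n : exists z : int, P ^+ n * Sa a n = z%:~R.
Proof.
elim: n => [|n [z hz]]; first by exists 0; rewrite Sa0 mulr0.
exists (p%:Z * z + (a n.+1)%:Z); rewrite SaS rmorphD rmorphM /= -hz.
have h := Pn_gt0 n.
rewrite exprS; field; rewrite ?mulf_neq0 ?lt0r_neq0 //; exact: P_gt0.
Qed.

Lemma step_le (c : nat) k : (c < p)%N ->
  c%:R / P ^+ k.+1 <= (P ^+ k)^-1 - (P ^+ k.+1)^-1.
Proof.
move=> hc; have hk := Pn_gt0 k; have h1 := P_gt1.
have hcP : c%:R <= P - 1.
  by have := hc; rewrite -(ler_nat R) -natr1; lra.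
have -> : (P ^+ k)^-1 - (P ^+ k.+1)^-1 = (P - 1) / P ^+ k.+1.
  rewrite exprS; field; rewrite ?mulf_neq0 ?lt0r_neq0 //; lra.
by rewrite ler_wpM2r // invr_ge0 ltW // Pn_gt0.
Qed.

Lemma tail_bound x a e : is_ntexp p x a -> x - Sa a e <= (P ^+ e)^-1.
Proof.
move=> [hd [_ hc]].
have hj : forall j, Sa a (e + j) <= Sa a e + (P ^+ e)^-1 - (P ^+ (e + j))^-1.
  elim=> [|j IH]; first by rewrite addn0; lra.
  rewrite addnS SaS.
  have := step_le (a (e + j).+1) (e + j) (hd (e + j).+1 isT); lra.
suff : x <= Sa a e + (P ^+ e)^-1 by lra.
apply: (closed_cvg _ (@closed_le _ (Sa a e + (P ^+ e)^-1)) _ _ hc).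
exists e => // n /= hen; rewrite seriesSa -(subnKC hen).
have := hj (n - e)%N; have := Pn_gt0 (e + (n - e)); rewrite -invr_gt0; lra.
Qed.

Section Exist.
Variable x : R.
Hypothesis hx0 : 0 < x.
Hypothesis hx1 : x <= 1.

Definition N (k : nat) : int := Num.ceil (P ^+ k * x) - 1.

Lemma N_itv k : (N k)%:~R < P ^+ k * x <= (N k)%:~R + 1.
Proof.
rewrite /N; have := ceil_itv (P ^+ k * x); rewrite intrD /=.
by rewrite -[(-1)%:~R]/(-1) subrK.
Qed.

Lemma N0 : N 0 = 0.
Proof. by rewrite /N expr0 mul1r (@ceil_def _ x 1) ?subrr // hx0 hx1. Qed.

Lemma N_step k : (p%:Z * N k <= N k.+1)%R /\ (N k.+1 < p%:Z * N k + p%:Z)%R.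
Proof.
have [h1 h2] := andP (N_itv k); have [h3 h4] := andP (N_itv k.+1).
have hP := P_gt0.
have hpz : (p%:Z)%:~R = P :> R by [].
have e1 : P ^+ k.+1 * x = P * (P ^+ k * x) by rewrite exprS mulrA.
move: (N k) (N k.+1) h1 h2 h3 h4 => L M h1 h2 h3 h4.
split.
- rewrite -ltzD1 -(ltr_int R) intrD intrM hpz -[1%:~R]/(1 : R).
  have : P * L%:~R < P * (P ^+ k * x) by rewrite ltr_pM2l.
  by rewrite -e1; lra.
- rewrite -(ltr_int R) intrD intrM hpz.
  have : P * (P ^+ k * x) <= P * (L%:~R + 1) by rewrite ler_pM2l.
  by rewrite -e1; lra.
Qed.

Definition dig (k : nat) : nat := absz (N k - p%:Z * N k.-1)%R.

Lemma dig_eq k : (1 <= k)%N -> (dig k)%:R = (N k)%:~R - P * (N k.-1)%:~R :> R.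
Proof.
case: k => // k _ /=; have [h1 h2] := N_step k.
rewrite /dig /= natr_absz ger0_norm ?subr_ge0 //.
by rewrite rmorphB /= intrM.
Qed.

Lemma dig_lt k : (1 <= k)%N -> (dig k < p)%N.
Proof.
case: k => // k _ /=; have [h1 h2] := N_step k.
rewrite /dig /=; set M := (p%:Z * N k)%R in h1 h2 *; lia.
Qed.

Lemma Sa_dig n : Sa dig n = (N n)%:~R / P ^+ n.
Proof.
elim: n => [|n IH]; first by rewrite Sa0 N0 mul0r.
rewrite SaS IH dig_eq //= exprS; have := Pn_gt0 n; have := P_gt0 => h1 h2.
field; rewrite ?mulf_neq0 ?lt0r_neq0 //.
Qed.

Lemma Sa_dig_itv n : x - (P ^+ n)^-1 <= Sa dig n < x.
Proof.
rewrite Sa_dig; have [h1 h2] := andP (N_itv n); have h := Pn_gt0 n.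
apply/andP; split.
- rewrite lerBlDr.
  have -> : (N n)%:~R / P ^+ n + (P ^+ n)^-1 = ((N n)%:~R + 1) / P ^+ n.
    by rewrite mulrDl mul1r.
  rewrite ler_pdivlMr //; lra.
- rewrite ltr_pdivrMr //; lra.
Qed.

Lemma exists_ntexp : exists a, is_ntexp p x a.
Proof.
have hc : (series (fun k => (dig k.+1)%:R / (P ^+ k.+1) : R) @ \oo --> x)%classic.
  apply: (@squeeze_cvgr _ _ _ _ (fun n => x - (P^-1) ^+ n) (fun=> x)).
  - exists 0%N => // n _ /=; rewrite seriesSa exprVn; have := Sa_dig_itv n => /andP[-> /ltW ->] //.

  - have h : `|P^-1| < 1.
      rewrite ger0_norm ?invr_ge0 ?ltW ?P_gt0 //.
      by rewrite invf_lt1 ?P_gt0 ?P_gt1.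
    rewrite -{2}(subr0 x); exact: (cvgB (cvg_cst x) (cvg_expr h)).
  - exact: cvg_cst.
exists dig; split; [by move=> e; apply: dig_lt | split=> //].
move=> n; apply: NNPP => hn.
have hz : forall m, (n <= m)%N -> dig m = 0%N.
  by move=> m hm; apply: NNPP => hm'; apply: hn; exists m.
have hs : forall j, Sa dig (n + j) = Sa dig n.
  by elim=> [|j IH]; rewrite ?addn0 // addnS SaS IH hz ?leq_addr ?mul0r ?addr0 //; lia.
have : x <= Sa dig n.
  apply: (closed_cvg _ (@closed_le _ (Sa dig n)) _ _ hc).
  exists n => // m /= hm; rewrite seriesSa -(subnKC hm) hs //.
by have := Sa_dig_itv n; lra.
Qed.
End Exist.
End Aux.

Theorem mainTheorem14 (R : realType) (p : nat) (alpha : R) (e : nat) :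
  prime p -> 0 <= alpha <= 1 -> (1 <= e)%N ->
  [/\ ((Num.floor ((p%:R ^+ e - 1) * alpha))%:~R = p%:R ^+ e * trunc p alpha e
        <-> alpha <= p%:R ^+ e * tail p alpha e),
      (alpha <= p%:R ^+ e * tail p alpha e
        <-> alpha >= p%:R ^+ e / (p%:R ^+ e - 1) * trunc p alpha e) &
      (alpha >= p%:R ^+ e / (p%:R ^+ e - 1) * trunc p alpha e
        <-> (Num.floor ((p%:R ^+ e - 1) * alpha))%:~R = p%:R ^+ e * trunc p alpha e)].
Proof.
move=> /prime_gt1 hp /andP[ha0 ha1] he.
rewrite /tail /trunc.
have [->|hx] := eqVneq alpha 0.
  rewrite subr0 !mulr0 floor0; split; split => //.
have hx0 : 0 < alpha by rewrite lt0r hx.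

set a := ntdigits p alpha.
have Ha : is_ntexp p alpha a.
  by apply: epsilon_spec; apply: exists_ntexp.
have -> : \sum_(1 <= i < e.+1) (a i)%:R / p%:R ^+ i = @Sa R p a e by [].
set T := @Sa R p a e.
set q := (p%:R : R) ^+ e.
have [z hz] := @Sa_int R p hp a e.
have hb := @tail_bound R p hp alpha a e Ha.
have hq1 : 1 < q.
  rewrite /q -(subnKC he) exprS.
  have h1 : 1 < (p%:R : R) := @P_gt1 R p hp.
  have h2 : 1 <= (p%:R : R) ^+ (e - 1) by rewrite exprn_ege1 // ltW.
  nra.
have hqx : q * alpha - z%:~R <= 1.
  rewrite -hz -mulrBr; have hq0 : 0 < q by lra.
  by rewrite -(ler_pM2l hq0) mulrV ?unitfE ?lt0r_neq0 // in hb.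
rewrite hz.
have AB : ((Num.floor ((q - 1) * alpha))%:~R = z%:~R :> R) <-> alpha <= q * (alpha - T).
  rewrite mulrBr hz; split.
  - move=> /intr_inj /eqP; rewrite floor_eq intrD => /andP[h1 h2]; lra.
  - move=> h; congr intr; apply/eqP; rewrite floor_eq intrD; apply/andP; split.
      lra.
    rewrite -[1%:~R]/(1 : R); lra.
have BC : alpha <= q * (alpha - T) <-> q / (q - 1) * T <= alpha.
  rewrite mulrAC hz ler_pdivrMr; last lra.
  rewrite mulrBr hz; split => h; lra.
split; [exact: AB | exact: BC | by rewrite -BC -AB].
Qed.
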